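(* Let $\widehat{A}=A+\epsilon B$ and $\widehat{C}=C+\epsilon D$ with $A,B,C,D\in\mathbb{R}^{n\times n}$ be such that the dual Moore-Penrose generalized inverses of $\widehat{A}$, $\widehat{C}$ and $\widehat{A}\widehat{C}$ exist and have the particular form $\widehat{A}^{\dagger}=A^{\dagger}-\epsilon A^{\dagger}BA^{\dagger}$, $\widehat{C}^{\dagger}=C^{\dagger}-\epsilon C^{\dagger}DC^{\dagger}$, $(\widehat{A}\widehat{C})^{\dagger}=(AC)^{\dagger}-\epsilon (AC)^{\dagger}(AD+BC)(AC)^{\dagger}$. If $AC=CA$, $A^*C=CA^*$, $C^{\dagger}B=BC^{\dagger}$ and $A^{\dagger}D=DA^{\dagger}$, then $(\widehat{A}\widehat{C})^{\dagger}=\widehat{A}^{\dagger}\widehat{C}^{\dagger}=\widehat{C}^{\dagger}\widehat{A}^{\dagger}$.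
   Context: A dual number is $a+\epsilon b$ with $a,b\in\mathbb{R}$, where $\epsilon\neq 0$, $\epsilon^2=0$ and $\epsilon$ commutes with reals. A dual matrix is $A+\epsilon B$ with $A,B$ real; sums and products are computed formally using $\epsilon^2=0$, transposition is $(A+\epsilon B)^T=A^T+\epsilon B^T$, and equality means equality of real and dual parts. $A^\dagger$ is the Moore-Penrose inverse and $A^*$ the (conjugate) transpose of a real matrix $A$. The dual Moore-Penrose generalized inverse (DMPGI) $\widehat{A}^\dagger$ of a dual matrix $\widehat{A}$ is the unique dual matrix $\widehat{X}$ (if it exists) with $\widehat{A}\widehat{X}\widehat{A}=\widehat{A}$, $\widehat{X}\widehat{A}\widehat{X}=\widehat{X}$, $(\widehat{A}\widehat{X})^T=\widehat{A}\widehat{X}$, $(\widehat{X}\widehat{A})^T=\widehat{X}\widehat{A}$. *)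

(* Defs.v *)
From HB Require Import structures.
From mathcomp Require Import all_boot all_order all_algebra.
From mathcomp Require Import reals.
Set Implicit Arguments. Unset Strict Implicit. Unset Printing Implicit Defensive.
Import GRing.Theory Num.Theory.
Local Open Scope ring_scope.

(* X is the Moore-Penrose inverse of the real matrix A (A^* = A^T over R). *)
Definition is_MP (R : realType) (n : nat) (A X : 'M[R]_n) : Prop :=
  [/\ A *m X *m A = A, X *m A *m X = X,
      (A *m X)^T = A *m X & (X *m A)^T = X *m A].

(* Dual matrix A + eps B represented by the pair (A, B). *)
Definition dualmx (R : realType) (n : nat) := ('M[R]_n * 'M[R]_n)%type.

Definition dmul (R : realType) (n : nat) (P Q : dualmx R n) : dualmx R n :=
  (P.1 *m Q.1, P.1 *m Q.2 + P.2 *m Q.1).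

Definition dtr (R : realType) (n : nat) (P : dualmx R n) : dualmx R n :=
  (P.1^T, P.2^T).

Definition is_DMPGI (R : realType) (n : nat) (A X : dualmx R n) : Prop :=
  [/\ dmul (dmul A X) A = A, dmul (dmul X A) X = X,
      dtr (dmul A X) = dmul A X & dtr (dmul X A) = dmul X A].

(* Main.v *)
Require Import Defs.
From HB Require Import structures.
From mathcomp Require Import all_boot all_order all_algebra.
From mathcomp Require Import reals.
Import GRing.Theory Num.Theory.
Local Open Scope ring_scope.


Lemma mp_comm (R : realType) (n : nat) (A Ad X : 'M[R]_n) : is_MP A Ad -> X *m A = A *m X -> X *m A^T = A^T *m X ->
  X *m Ad = Ad *m X.
Proof.
case=> e1 e2 e3 e4 c1 c2.
have h1 : Ad = Ad *m Ad^T *m A^T.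
  by rewrite -mulmxA -trmx_mul e3 mulmxA e2.
have h2 : Ad = A^T *m Ad^T *m Ad.
  by rewrite -trmx_mul e4 e2.
have h3 : A^T *m A *m Ad = A^T.
  by rewrite -mulmxA -e3 -trmx_mul e1.
have h4 : Ad *m A *m A^T = A^T.
  by rewrite -e4 -trmx_mul mulmxA e1.
have L : Ad *m X = Ad *m X *m A *m Ad.
  rewrite {1}h1 -!mulmxA -c2 -h3 !mulmxA.
  by rewrite -(mulmxA (Ad *m Ad^T) X A^T) c2 mulmxA -h1.
have L2 : X *m Ad = Ad *m A *m X *m Ad.
  rewrite {1}h2 !mulmxA c2 -h4 -(mulmxA (Ad *m A) A^T X) -c2 !mulmxA.
  by rewrite -(mulmxA _ A^T Ad^T) -(mulmxA _ (A^T *m Ad^T) Ad) -h2.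
by rewrite L L2 -(mulmxA Ad X A) c1 !mulmxA.
Qed.


Lemma mp_uniq (R : realType) (n : nat) (A X Y : 'M[R]_n) : is_MP A X -> is_MP A Y -> X = Y.
Proof.
case=> a1 a2 a3 a4 [b1 b2 b3 b4].
have h1 : (A *m X)^T = A *m X *m (A *m Y).
  by rewrite -{1}b1 -mulmxA trmx_mul a3 b3.
have h2 : (Y *m A)^T = X *m A *m (Y *m A).
  by rewrite -{1}a1 !mulmxA -(mulmxA (Y *m A) X A) trmx_mul a4 b4 mulmxA.
have eX : X = X *m A *m Y.
  by rewrite -{1}a2 -mulmxA -a3 h1 !mulmxA a2.
have eY : Y = X *m A *m Y.
  by rewrite -{1}b2 -b4 h2 -!mulmxA (mulmxA Y A Y) b2 mulmxA.
exact: (etrans eX (esym eY)).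
Qed.

Lemma swapl (R : realType) (n : nat) (X Y Z : 'M[R]_n) : X *m Y = Y *m X -> X *m (Y *m Z) = Y *m (X *m Z).
Proof. by move=> h; rewrite !mulmxA h. Qed.
Arguments swapl {R n X Y Z}.

Theorem mainTheorem8 (R : realType) (n : nat) (A B C D Ad Cd ACd : 'M[R]_n) :
  is_MP A Ad -> is_MP C Cd -> is_MP (A *m C) ACd ->
  is_DMPGI (A, B) (Ad, - (Ad *m B *m Ad)) ->
  is_DMPGI (C, D) (Cd, - (Cd *m D *m Cd)) ->
  is_DMPGI (dmul (A, B) (C, D))
           (ACd, - (ACd *m (A *m D + B *m C) *m ACd)) ->
  A *m C = C *m A -> A^T *m C = C *m A^T ->
  Cd *m B = B *m Cd -> Ad *m D = D *m Ad ->
  (ACd, - (ACd *m (A *m D + B *m C) *m ACd))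
    = dmul (Ad, - (Ad *m B *m Ad)) (Cd, - (Cd *m D *m Cd)) /\
  dmul (Ad, - (Ad *m B *m Ad)) (Cd, - (Cd *m D *m Cd))
    = dmul (Cd, - (Cd *m D *m Cd)) (Ad, - (Ad *m B *m Ad)).
Proof.
move=> mA mC mAC _ _ _ cAC cATC cCdB cAdD.
have cCTA : C^T *m A = A *m C^T by move: (congr1 trmx cATC); rewrite !trmx_mul trmxK.
have cCTAT : C^T *m A^T = A^T *m C^T by move: (congr1 trmx cAC); rewrite !trmx_mul.
have cCAd : C *m Ad = Ad *m C.
  by apply: (@mp_comm R n A Ad C mA).
have cCTAd : C^T *m Ad = Ad *m C^T by apply: (@mp_comm R n A Ad C^T mA).
have cAdCd : Ad *m Cd = Cd *m Ad by apply: (@mp_comm R n C Cd Ad mC).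
have cACd : A *m Cd = Cd *m A by apply: (@mp_comm R n C Cd A mC).
have [a1 a2 a3 a4] := mA.
have [c1 c2 c3 c4] := mC.
have eACd : ACd = Ad *m Cd.
  apply: (@mp_uniq R n (A *m C) ACd (Ad *m Cd) mAC); split.
  - rewrite -!mulmxA (swapl cCAd) (swapl (esym cACd)) (swapl (esym cAC)).
    by rewrite !mulmxA a1 -!mulmxA (mulmxA C Cd C) c1.
  - rewrite -!mulmxA (swapl (esym cACd)) (swapl cCAd) (swapl (esym cAdCd)).
    by rewrite !mulmxA a2 -!mulmxA (mulmxA Cd C Cd) c2.
  - have eP : A *m C *m (Ad *m Cd) = A *m Ad *m (C *m Cd).
      by rewrite -!mulmxA (swapl cCAd).
    rewrite eP trmx_mul a3 c3 -!mulmxA (swapl (esym cACd)) (swapl (esym cAC)).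
    by rewrite -cAdCd (swapl cCAd).
  - have eQ : Ad *m Cd *m (A *m C) = Ad *m A *m (Cd *m C).
      by rewrite -!mulmxA (swapl (esym cACd)).
    rewrite eQ trmx_mul a4 c4 -!mulmxA (swapl cCAd) (swapl (esym cAdCd)).
    by rewrite -cAC (swapl (esym cACd)).
subst ACd; rewrite /dmul /=; split; congr pair.
- rewrite mulmxDr mulmxDl opprD mulmxN mulNmx; congr (- _ + - _).
  + rewrite -!mulmxA (swapl (esym cACd)) (swapl (esym cAdD)) (swapl (esym cAdCd)).
    by rewrite !mulmxA a2.
  + rewrite -!mulmxA (swapl cCdB) (swapl cCAd) (swapl (esym cAdCd)).
    by rewrite (mulmxA Cd C Cd) c2 !mulmxA.
- exact: cAdCd.
- rewrite !mulmxN !mulNmx [RHS]addrC; congr (- _ + - _).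
  + by rewrite -!mulmxA -cAdCd (swapl (esym cAdD)) (swapl (esym cAdCd)).
  + by rewrite -!mulmxA (swapl (esym cAdCd)) (swapl cCdB) -cAdCd.
Qed.
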